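(* For every $n\ge1$, the unimodal spi-logic $\mathsf{SPi}+\{\iota^n_{fun}\}$ is complete.
   Context: Unimodal setting: one diamond $\Diamond$. Sp-formulas: built from propositional variables and $\top$ by $\wedge$ and $\Diamond$; sp-implications $\sigma\to\tau$. A SLO is an algebra $(A,\wedge,\top,\Diamond)$ with $(A,\wedge,\top)$ a meet-semilattice with top and $\Diamond$ monotone; it validates $\sigma\to\tau$ if $\sigma[\mathfrak a]\le\tau[\mathfrak a]$ for all valuations. Frames $(W,R)$ with standard Kripke semantics. $\Sigma\models_{\mathsf{Kr}}\iota$ (resp. $\models_{\mathsf{SLO}}$): $\iota$ valid in every frame (resp. SLO) validating $\Sigma$. The spi-logic $\mathsf{SPi}+\Sigma$ is complete if $\Sigma\models_{\mathsf{Kr}}\iota\iff\Sigma\models_{\mathsf{SLO}}\iota$ for every sp-implication $\iota$. For $P=\{p_0,\dots,p_n\}$, $\iota^n_{fun}=\big(\bigwedge_{Q\subseteq P,|Q|=n}\Diamond\bigwedge Q\to\Diamond\bigwedge P\big)$. *)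

(* Defs.v *)
From Stdlib Require Import List Arith.
Import ListNotations.

Inductive spf : Type :=
| Var : nat -> spf
| Top : spf
| And : spf -> spf -> spf
| Dia : spf -> spf.

Record spi : Type := Imp { ante : spf; cons : spf }.

Record frame : Type := { world : Type; rel : world -> world -> Prop }.

Fixpoint ksat (F : frame) (V : nat -> world F -> Prop) (w : world F) (f : spf) : Prop :=
  match f with
  | Var k => V k w
  | Top => True
  | And a b => ksat F V w a /\ ksat F V w b
  | Dia a => exists v, rel F w v /\ ksat F V v a
  end.

Definition frame_valid (F : frame) (i : spi) : Prop :=
  forall (V : nat -> world F -> Prop) (w : world F),
    ksat F V w (ante i) -> ksat F V w (cons i).

Definition Kr_conseq (Sigma : spi -> Prop) (i : spi) : Prop :=
  forall F : frame, (forall s, Sigma s -> frame_valid F s) -> frame_valid F i.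

Record SLO : Type := {
  car : Type;
  meet : car -> car -> car;
  stop : car;
  sdia : car -> car;
  meet_assoc : forall a b c, meet a (meet b c) = meet (meet a b) c;
  meet_comm : forall a b, meet a b = meet b a;
  meet_idem : forall a, meet a a = a;
  meet_top : forall a, meet a stop = a;
  (* order of the semilattice: a <= b iff a /\ b = a *)
  sdia_mono : forall a b, meet a b = a -> meet (sdia a) (sdia b) = sdia a
}.

Definition sle (A : SLO) (a b : car A) : Prop := meet A a b = a.

Fixpoint aeval (A : SLO) (v : nat -> car A) (f : spf) : car A :=
  match f with
  | Var k => v k
  | Top => stop A
  | And a b => meet A (aeval A v a) (aeval A v b)
  | Dia a => sdia A (aeval A v a)
  end.

Definition slo_valid (A : SLO) (i : spi) : Prop :=
  forall v : nat -> car A, sle A (aeval A v (ante i)) (aeval A v (cons i)).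

Definition SLO_conseq (Sigma : spi -> Prop) (i : spi) : Prop :=
  forall A : SLO, (forall s, Sigma s -> slo_valid A s) -> slo_valid A i.

Definition spi_complete (Sigma : spi -> Prop) : Prop :=
  forall i : spi, Kr_conseq Sigma i <-> SLO_conseq Sigma i.

Fixpoint bigAnd (l : list spf) : spf :=
  match l with
  | [] => Top
  | [x] => x
  | x :: xs => And x (bigAnd xs)
  end.

(* P = {p_0,...,p_n}; the n-element subsets of P are P \ {p_i}, i = 0..n *)
Definition P_vars (n : nat) : list spf := map Var (seq 0 (S n)).

Definition Q_minus (n i : nat) : list spf :=
  map Var (filter (fun j => negb (Nat.eqb j i)) (seq 0 (S n))).

Definition iota_fun (n : nat) : spi :=
  Imp (bigAnd (map (fun i => Dia (bigAnd (Q_minus n i))) (seq 0 (S n))))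
      (Dia (bigAnd (P_vars n))).

(* Main.v *)
Require Import Defs.
From Stdlib Require Import List Arith Lia Classical FunctionalExtensionality PropExtensionality.
Import ListNotations.

Lemma sle_refl (A : SLO) a : sle A a a.
Proof. unfold sle. apply meet_idem. Qed.

Lemma sle_trans (A : SLO) a b c : sle A a b -> sle A b c -> sle A a c.
Proof.
  unfold sle; intros H1 H2. rewrite <- H1, <- meet_assoc, H2. reflexivity.
Qed.

Lemma sle_meet_l (A : SLO) a b : sle A (meet A a b) a.
Proof.
  unfold sle. rewrite (meet_comm A (meet A a b) a), meet_assoc, meet_idem. reflexivity.
Qed.

Lemma sle_meet_r (A : SLO) a b : sle A (meet A a b) b.
Proof.
  unfold sle. rewrite <- meet_assoc, meet_idem. reflexivity.
Qed.

Lemma sle_glb (A : SLO) y a b : sle A y a -> sle A y b -> sle A y (meet A a b).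
Proof.
  unfold sle; intros H1 H2. rewrite meet_assoc, H1, H2. reflexivity.
Qed.

Lemma sle_top (A : SLO) y : sle A y (stop A).
Proof. unfold sle. apply meet_top. Qed.

Lemma sle_dia (A : SLO) a b : sle A a b -> sle A (sdia A a) (sdia A b).
Proof. unfold sle. apply sdia_mono. Qed.

Lemma ksat_bigAnd F V w l :
  ksat F V w (bigAnd l) <-> (forall f, In f l -> ksat F V w f).
Proof.
  induction l as [|x xs IH].
  - simpl. split; [intros _ f []|intros _; exact I].
  - destruct xs as [|y ys].
    + simpl. split; [intros H f [<-|[]]; exact H| intros H; apply H; auto].
    + change (bigAnd (x :: y :: ys)) with (And x (bigAnd (y :: ys))).
      simpl ksat. rewrite IH. split.
      * intros [H1 H2] f [<-|Hf]; auto.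
      * intros H; split; [apply H; left; auto| intros f Hf; apply H; right; auto].
Qed.

Lemma aeval_bigAnd A v y l :
  sle A y (aeval A v (bigAnd l)) <-> (forall f, In f l -> sle A y (aeval A v f)).
Proof.
  induction l as [|x xs IH].
  - simpl. split; [intros _ f []|intros _; apply sle_top].
  - destruct xs as [|z zs].
    + simpl. split; [intros H f [<-|[]]; exact H| intros H; apply H; auto].
    + change (bigAnd (x :: z :: zs)) with (And x (bigAnd (z :: zs))).
      simpl aeval. split.
      * intros H f [<-|Hf].
        -- eapply sle_trans; [exact H| apply sle_meet_l].
        -- apply IH; auto. eapply sle_trans; [exact H| apply sle_meet_r].
      * intros H; apply sle_glb; [apply H; left; auto| apply IH; intros f Hf; apply H; right; auto].
Qed.

Lemma in_Q_minus n i f : In f (Q_minus n i) <-> exists j, f = Var j /\ j <= n /\ j <> i.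
Proof.
  unfold Q_minus. rewrite in_map_iff. split.
  - intros [j [<- Hj]]. apply filter_In in Hj as [Hj Hb]. apply in_seq in Hj.
    exists j; split; auto. split; [lia|]. intros ->. rewrite Nat.eqb_refl in Hb. discriminate.
  - intros [j [-> [H1 H2]]]. exists j; split; auto. apply filter_In; split.
    + apply in_seq; lia.
    + apply Nat.eqb_neq in H2. rewrite H2. reflexivity.
Qed.

Lemma in_P_vars n f : In f (P_vars n) <-> exists j, f = Var j /\ j <= n.
Proof.
  unfold P_vars. rewrite in_map_iff. split.
  - intros [j [<- Hj]]. apply in_seq in Hj. exists j; split; auto; lia.
  - intros [j [-> H]]. exists j; split; auto. apply in_seq; lia.
Qed.

Lemma in_ante n f :
  In f (map (fun i => Dia (bigAnd (Q_minus n i))) (seq 0 (S n))) <->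
  exists i, f = Dia (bigAnd (Q_minus n i)) /\ i <= n.
Proof.
  rewrite in_map_iff. split.
  - intros [i [<- Hi]]. apply in_seq in Hi. exists i; split; auto; lia.
  - intros [i [-> H]]. exists i; split; auto. apply in_seq; lia.
Qed.

Lemma ax_use (A : SLO) n (Hax : slo_valid A (iota_fun n)) :
  forall y (a w : nat -> car A) z,
    (forall i, i <= n -> sle A y (sdia A (w i))) ->
    (forall i j, i <= n -> j <= n -> i <> j -> sle A (w i) (a j)) ->
    (forall u, (forall j, j <= n -> sle A u (a j)) -> sle A u z) ->
    sle A y (sdia A z).
Proof.
  intros y a w z H1 H2 H3.
  specialize (Hax a).
  change (sle A (aeval A a (bigAnd (map (fun i => Dia (bigAnd (Q_minus n i))) (seq 0 (S n)))))
     (sdia A (aeval A a (bigAnd (P_vars n))))) in Hax.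
  assert (Hy : sle A y (aeval A a (bigAnd (map (fun i => Dia (bigAnd (Q_minus n i))) (seq 0 (S n)))))).
  { apply aeval_bigAnd. intros f Hf. apply in_ante in Hf as [i [-> Hi]]. simpl.
    eapply sle_trans; [apply (H1 i Hi)|]. apply sle_dia. apply aeval_bigAnd.
    intros g Hg. apply in_Q_minus in Hg as [j [-> [Hj Hji]]]. simpl. apply H2; auto. }
  eapply sle_trans; [exact (sle_trans _ _ _ _ Hy Hax)|]. apply sle_dia.
  apply H3. intros j Hj.
  apply (proj1 (aeval_bigAnd A a _ (P_vars n)) (sle_refl _ _) (Var j)).
  apply in_P_vars. exists j; auto.
Qed.

Lemma ph {X : Type} : forall (S : list X) (P : nat -> X -> Prop) m,
  length S < m -> (forall i, i < m -> exists x, In x S /\ P i x) ->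
  exists i j x, i < j /\ j < m /\ P i x /\ P j x.
Proof.
  induction S as [|a S' IH]; intros P m Hlen H.
  - destruct (H 0 ltac:(simpl in Hlen; lia)) as [x [[] _]].
  - destruct (classic (exists k, k < m /\ P k a)) as [[k [Hk Pk]]|Hno].
    + destruct (classic (exists k', k' < m /\ k' <> k /\ P k' a)) as [[k' [Hk' [Hne Pk']]]|Hno'].
      * destruct (Nat.lt_ge_cases k k') as [Hl|Hl].
        -- exists k, k', a; auto.
        -- exists k', k, a; repeat split; auto; lia.
      * set (idx := fun i => if i <? k then i else S i).
        assert (Hidx : forall i, idx i <> k /\ (i < m - 1 -> idx i < m)).
        { intro i; unfold idx; destruct (Nat.ltb_spec i k); split; lia. }
        assert (Hmono : forall i j, i < j -> idx i < idx j).
        { intros i j Hij; unfold idx; destruct (Nat.ltb_spec i k), (Nat.ltb_spec j k); lia. }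
        destruct (IH (fun i x => P (idx i) x) (m - 1)) as [i [j [x [Hij [Hj [P1 P2]]]]]].
        { simpl in Hlen; lia. }
        { intros i Hi. destruct (Hidx i) as [Hne Hlt].
          destruct (H (idx i) (Hlt Hi)) as [x [[<-|Hx] Px]].
          - exfalso. apply Hno'. exists (idx i); auto.
          - exists x; auto. }
        exists (idx i), (idx j), x. split; [apply Hmono; auto|]. split; [apply Hidx; lia|]. auto.
    + destruct (IH P m) as [i [j [x Hx]]].
      { simpl in Hlen; lia. }
      { intros i Hi. destruct (H i Hi) as [x [[<-|Hx] Px]].
        - exfalso. apply Hno. exists i; auto.
        - exists x; auto. }
      exists i, j, x; auto.
Qed.

Lemma degree_valid (F : frame) n : 1 <= n ->
  (forall w, exists S, length S <= n /\ forall x, rel F w x -> In x S) ->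
  frame_valid F (iota_fun n).
Proof.
  intros Hn Hdeg V w Hw. cbn [Defs.ante Defs.cons iota_fun] in *.
  rewrite ksat_bigAnd in Hw.
  destruct (Hdeg w) as [Sl [HS HSin]].
  destruct (ph Sl (fun i u => rel F w u /\ ksat F V u (bigAnd (Q_minus n i))) (Datatypes.S n))
    as [i [j [u [Hij [Hj [[Ru Hu1] [_ Hu2]]]]]]].
  { lia. }
  { intros i Hi. assert (Hin : In (Dia (bigAnd (Q_minus n i))) (map (fun i => Dia (bigAnd (Q_minus n i))) (seq 0 (Datatypes.S n)))).
    { apply in_ante. exists i; split; [reflexivity| lia]. }
    assert (Hf := Hw _ Hin).
    destruct Hf as [u [Ru Hu]]. exists u; split; [apply HSin; auto| auto]. }
  exists u; split; auto. apply ksat_bigAnd. intros f Hf. apply in_P_vars in Hf as [k [-> Hk]].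
  rewrite ksat_bigAnd in Hu1, Hu2.
  destruct (Nat.eq_dec k i) as [->|Hki].
  - apply (Hu2 (Var i)). apply in_Q_minus. exists i; repeat split; lia.
  - apply (Hu1 (Var k)). apply in_Q_minus. exists k; repeat split; auto.
Qed.

Inductive nc : Type := NVar : nat -> nc | NDia : list nc -> nc.

Fixpoint emb (c : nc) : spf :=
  match c with
  | NVar k => Var k
  | NDia l => Dia ((fix embl (l : list nc) : spf :=
                     match l with [] => Top | c :: l' => And (emb c) (embl l') end) l)
  end.

Fixpoint embl (l : list nc) : spf :=
  match l with [] => Top | c :: l' => And (emb c) (embl l') end.

Lemma emb_NDia l : emb (NDia l) = Dia (embl l).
Proof. reflexivity. Qed.

Fixpoint normal (n : nat) (c : nc) : Prop :=
  match c with
  | NVar _ => True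
  | NDia l => length l <= n /\
      (fix nl (l : list nc) : Prop := match l with [] => True | c :: l' => normal n c /\ nl l' end) l
  end.

Lemma normal_NDia n l : normal n (NDia l) <-> length l <= n /\ forall c, In c l -> normal n c.
Proof.
  simpl. split; intros [H1 H2]; split; auto; clear H1.
  - induction l as [|c l IH]; [intros _ []|]. destruct H2 as [H2 H3].
    intros c' [<-|Hc]; auto.
  - induction l as [|c l IH]; [exact I|]. split; [apply H2; left; auto| apply IH; intros; apply H2; right; auto].
Qed.

Fixpoint nc_ind2 (P : nc -> Prop) (HV : forall k, P (NVar k))
  (HD : forall l, (forall c, In c l -> P c) -> P (NDia l)) (c : nc) {struct c} : P c :=
  match c with
  | NVar k => HV k
  | NDia l => HD l ((fix G (l : list nc) : forall c, In c l -> P c :=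
                       match l with
                       | [] => fun c H => match H with end
                       | c' :: l' => fun c H => match H with
                                               | or_introl e => eq_ind c' P (nc_ind2 P HV HD c') c e
                                               | or_intror H' => G l' c H'
                                               end
                       end) l)
  end.

Lemma ksat_embl F V w l : ksat F V w (embl l) <-> (forall c, In c l -> ksat F V w (emb c)).
Proof.
  induction l as [|c l IH]; simpl.
  - split; [intros _ c []|auto].
  - rewrite IH. split; [intros [H1 H2] c' [<-|H]; auto| intros H; split; auto].
Qed.

Lemma aeval_embl A v y l :
  sle A y (aeval A v (embl l)) <-> (forall c, In c l -> sle A y (aeval A v (emb c))).
Proof.
  induction l as [|c l IH]; simpl.
  - split; [intros _ c []|intros _; apply sle_top].
  - split.
    + intros H c' [<-|Hc].
      * eapply sle_trans; [exact H|apply sle_meet_l].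
      * apply IH; auto. eapply sle_trans; [exact H|apply sle_meet_r].
    + intros H. apply sle_glb; [apply H; auto| apply IH; auto].
Qed.

Definition CR (n : nat) (w x : option nc) : Prop :=
  match w with
  | None => x = None
  | Some (NVar _) => x = None
  | Some (NDia l) => length l <= n /\ exists e, In e l /\ x = Some e
  end.

Definition CF (n : nat) : frame := {| world := option nc; rel := CR n |}.

Definition CV (q : nat) (w : option nc) : Prop :=
  match w with Some (NVar p) => q <> p | _ => True end.

Lemma CU n : forall f, ksat (CF n) CV None f.
Proof.
  induction f; simpl; auto.
  exists None; split; auto.
Qed.

Lemma Ca n : forall c, normal n c -> ~ ksat (CF n) CV (Some c) (emb c).
Proof.
  apply (nc_ind2 (fun c => normal n c -> ~ ksat (CF n) CV (Some c) (emb c))).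
  - intros k _ H. simpl in H. apply H; reflexivity.
  - intros l IH Hn H. rewrite emb_NDia in H. apply normal_NDia in Hn as [Hl Hn].
    destruct H as [x [[_ [e [He ->]]] Hx]].
    rewrite ksat_embl in Hx. apply (IH e He (Hn e He)). apply Hx; auto.
Qed.

Lemma Cb n : forall c, normal n c -> forall g, ~ ksat (CF n) CV (Some c) g ->
  forall (A : SLO) v, sle A (aeval A v g) (aeval A v (emb c)).
Proof.
  apply (nc_ind2 (fun c => normal n c -> forall g, ~ ksat (CF n) CV (Some c) g ->
     forall (A : SLO) v, sle A (aeval A v g) (aeval A v (emb c)))).
  - intros k _ g. induction g as [q| |a IHa b IHb|a IHa]; intros Hg A v.
    + simpl in Hg. destruct (Nat.eq_dec q k) as [->|Hne]; [apply sle_refl| exfalso; auto].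
    + exfalso; apply Hg; exact I.
    + simpl in Hg. apply not_and_or in Hg as [Hg|Hg].
      * eapply sle_trans; [apply sle_meet_l| apply IHa; auto].
      * eapply sle_trans; [apply sle_meet_r| apply IHb; auto].
    + exfalso; apply Hg. exists None; split; [reflexivity| apply CU].
  - intros l IH Hn. apply normal_NDia in Hn as [Hl Hn].
    intro g. induction g as [q| |a IHa b IHb|a IHa]; intros Hg A v.
    + exfalso; apply Hg; exact I.
    + exfalso; apply Hg; exact I.
    + simpl in Hg. apply not_and_or in Hg as [Hg|Hg].
      * eapply sle_trans; [apply sle_meet_l| apply IHa; auto].
      * eapply sle_trans; [apply sle_meet_r| apply IHb; auto].
    + rewrite emb_NDia. simpl aeval. apply sle_dia. apply aeval_embl.
      intros e He. apply (IH e He (Hn e He)). intro Hs. apply Hg.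
      exists (Some e). split; auto. split; auto. exists e; auto.
Qed.

Lemma Cv n : 1 <= n -> frame_valid (CF n) (iota_fun n).
Proof.
  intros Hn. apply degree_valid; auto.
  intros [[k|l]|].
  - exists [None]. split; [simpl; lia|]. intros x Hx. simpl in Hx. subst; left; auto.
  - destruct (le_lt_dec (length l) n) as [Hl|Hl].
    + exists (map Some l). rewrite length_map. split; auto.
      intros x [_ [e [He ->]]]. apply in_map; auto.
    + exists []. split; [simpl; lia|]. intros x [H _]. lia.
  - exists [None]. split; [simpl; lia|]. intros x Hx. simpl in Hx. subst; left; auto.
Qed.

Definition remn (i : nat) (l : list nc) := firstn i l ++ skipn (S i) l.

Fixpoint splitD (n f : nat) (L : list nc) : list nc :=
  match f with
  | 0 => [NDia L]
  | S f' => if length L <=? n then [NDia L]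
            else NDia (firstn n L) ::
                 flat_map (fun i => splitD n f' (remn i (firstn n L) ++ skipn n L)) (seq 0 n)
  end.

Lemma in_firstn {X} k (l : list X) x : In x (firstn k l) -> In x l.
Proof. intro H. rewrite <- (firstn_skipn k l). apply in_app_iff; auto. Qed.
Lemma in_skipn {X} k (l : list X) x : In x (skipn k l) -> In x l.
Proof. intro H. rewrite <- (firstn_skipn k l). apply in_app_iff; auto. Qed.

Lemma in_remn i l x : In x (remn i l) -> In x l.
Proof. unfold remn. rewrite in_app_iff. intros [H|H]; [eapply in_firstn|eapply in_skipn]; eauto. Qed.

Lemma length_remn i l : i < length l -> length (remn i l) = length l - 1.
Proof. intro H. unfold remn. rewrite length_app, length_firstn, length_skipn. lia. Qed.

Lemma nth_in_remn i j l d : j < length l -> j <> i -> In (nth j l d) (remn i l).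
Proof.
  intros Hj Hji. unfold remn. apply in_app_iff.
  destruct (Nat.lt_ge_cases j i) as [Hlt|Hge].
  - left. rewrite <- (Nat.ltb_lt j i) in Hlt.
    replace (nth j l d) with (nth j (firstn i l) d).
    + apply nth_In. rewrite length_firstn. apply Nat.ltb_lt in Hlt. lia.
    + rewrite nth_firstn, Hlt. reflexivity.
  - right. replace (nth j l d) with (nth (j - S i) (skipn (S i) l) d).
    + apply nth_In. rewrite length_skipn. lia.
    + rewrite nth_skipn. f_equal. lia.
Qed.

Lemma split_normal n : forall f L, length L <= f -> (forall c, In c L -> normal n c) ->
  forall c, In c (splitD n f L) -> normal n c.
Proof.
  induction f as [|f IH]; intros L HL Hn c Hc.
  - simpl in Hc. destruct Hc as [<-|[]]. apply normal_NDia. split; [lia|auto].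
  - simpl in Hc. destruct (Nat.leb_spec (length L) n) as [Hle|Hgt].
    + destruct Hc as [<-|[]]. apply normal_NDia. auto.
    + destruct Hc as [<-|Hc].
      * apply normal_NDia. rewrite length_firstn. split; [lia|].
        intros c Hc; apply Hn; eapply in_firstn; eauto.
      * apply in_flat_map in Hc as [i [Hi Hc]]. apply in_seq in Hi.
        eapply IH; [| |exact Hc].
        -- rewrite length_app, length_remn, length_firstn, length_skipn; rewrite ?length_firstn; lia.
        -- intros c' Hc'. apply Hn. apply in_app_iff in Hc' as [H|H].
           ++ eapply in_firstn. eapply in_remn. eauto.
           ++ eapply in_skipn; eauto.
Qed.

Lemma split_kripke n F V w : forall f L, ksat F V w (Dia (embl L)) ->
  forall c, In c (splitD n f L) -> ksat F V w (emb c).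
Proof.
  induction f as [|f IH]; intros L HL c Hc.
  - destruct Hc as [<-|[]]. exact HL.
  - simpl in Hc. destruct (length L <=? n).
    + destruct Hc as [<-|[]]. exact HL.
    + destruct HL as [u [Ru Hu]]. rewrite ksat_embl in Hu.
      destruct Hc as [<-|Hc].
      * rewrite emb_NDia. exists u; split; auto. apply ksat_embl. intros c Hc.
        apply Hu. eapply in_firstn; eauto.
      * apply in_flat_map in Hc as [i [Hi Hc]]. eapply IH; [|exact Hc].
        exists u; split; auto. apply ksat_embl. intros c' Hc'. apply Hu.
        apply in_app_iff in Hc' as [H|H].
        -- eapply in_firstn. eapply in_remn. eauto.
        -- eapply in_skipn; eauto.
Qed.

Lemma split_slo n (Hn : 1 <= n) (A : SLO) (Hax : slo_valid A (iota_fun n)) v :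
  forall f L y, (forall c, In c (splitD n f L) -> sle A y (aeval A v (emb c))) ->
  sle A y (sdia A (aeval A v (embl L))).
Proof.
  induction f as [|f IH]; intros L y H.
  - apply (H (NDia L)). left; auto.
  - simpl in H. destruct (Nat.leb_spec (length L) n) as [Hle|Hgt].
    + apply (H (NDia L)). left; auto.
    + set (Fl := firstn n L) in *. set (R := skipn n L) in *.
      assert (HF : length Fl = n) by (unfold Fl; rewrite length_firstn; lia).
      set (a := fun j => if j <? n then aeval A v (emb (nth j Fl (NVar 0))) else aeval A v (embl R)).
      set (w := fun i => if i <? n then aeval A v (embl (remn i Fl ++ R)) else aeval A v (embl Fl)).
      apply (ax_use A n Hax y a w).
      * intros i Hi. unfold w. destruct (Nat.ltb_spec i n) as [Hlt|Hge].
        -- apply IH. intros c Hc. apply H. right. apply in_flat_map. exists i; split; auto.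
           apply in_seq; lia.
        -- apply (H (NDia Fl)). left; auto.
      * intros i j Hi Hj Hij. unfold a, w.
        destruct (Nat.ltb_spec j n) as [Hjn|Hjn]; destruct (Nat.ltb_spec i n) as [Hin|Hin].
        -- apply (proj1 (aeval_embl A v _ _) (sle_refl _ _)). apply in_app_iff; left.
           apply nth_in_remn; lia.
        -- apply (proj1 (aeval_embl A v _ _) (sle_refl _ _)). apply nth_In; lia.
        -- apply aeval_embl. intros c Hc.
           apply (proj1 (aeval_embl A v _ _) (sle_refl _ _)). apply in_app_iff; auto.
        -- lia.
      * intros u Hu. apply aeval_embl. intros c Hc.
        rewrite <- (firstn_skipn n L) in Hc. apply in_app_iff in Hc as [Hc|Hc].
        -- fold Fl in Hc. destruct (In_nth _ _ (NVar 0) Hc) as [j [Hj <-]].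
           specialize (Hu j ltac:(lia)). unfold a in Hu.
           destruct (Nat.ltb_spec j n); [exact Hu|lia].
        -- fold R in Hc. specialize (Hu n (le_n n)). unfold a in Hu.
           rewrite Nat.ltb_irrefl in Hu. eapply sle_trans; [exact Hu|].
           apply (proj1 (aeval_embl A v _ _) (sle_refl _ _)). exact Hc.
Qed.

Fixpoint NF (n : nat) (t : spf) : list nc :=
  match t with
  | Var k => [NVar k]
  | Top => []
  | And a b => NF n a ++ NF n b
  | Dia a => splitD n (length (NF n a)) (NF n a)
  end.

Lemma NF_normal n t : forall c, In c (NF n t) -> normal n c.
Proof.
  induction t as [k| |a IHa b IHb|a IHa]; simpl; intros c Hc.
  - destruct Hc as [<-|[]]; exact I.
  - destruct Hc.
  - apply in_app_iff in Hc as [H|H]; auto.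
  - eapply split_normal; [apply le_n| exact IHa| exact Hc].
Qed.

Lemma NF_kripke n F V t : forall w, ksat F V w t -> forall c, In c (NF n t) -> ksat F V w (emb c).
Proof.
  induction t as [k| |a IHa b IHb|a IHa]; simpl; intros w Hw c Hc.
  - destruct Hc as [<-|[]]; exact Hw.
  - destruct Hc.
  - destruct Hw as [Hw1 Hw2]. apply in_app_iff in Hc as [H|H]; auto.
  - eapply split_kripke; [|exact Hc]. destruct Hw as [u [Ru Hu]].
    exists u; split; auto. apply ksat_embl. apply IHa; auto.
Qed.

Lemma NF_slo n (Hn : 1 <= n) (A : SLO) (Hax : slo_valid A (iota_fun n)) v t :
  forall y, (forall c, In c (NF n t) -> sle A y (aeval A v (emb c))) -> sle A y (aeval A v t).
Proof.
  induction t as [k| |a IHa b IHb|a IHa]; simpl; intros y H.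
  - apply (H (NVar k)); left; auto.
  - apply sle_top.
  - apply sle_glb; [apply IHa|apply IHb]; intros c Hc; apply H; apply in_app_iff; auto.
  - eapply sle_trans; [eapply (split_slo n Hn A Hax v); exact H|].
    apply sle_dia. apply IHa. apply aeval_embl. apply sle_refl.
Qed.

Definition CA (F : frame) : SLO.
Proof.
  refine {| car := world F -> Prop;
            meet := fun X Y w => X w /\ Y w;
            stop := fun _ => True;
            sdia := fun X w => exists u, rel F w u /\ X u |}.
  - intros a b c. apply functional_extensionality; intro w.
    apply propositional_extensionality. tauto.
  - intros a b. apply functional_extensionality; intro w.
    apply propositional_extensionality. tauto.
  - intros a. apply functional_extensionality; intro w.
    apply propositional_extensionality. tauto.
  - intros a. apply functional_extensionality; intro w.
    apply propositional_extensionality. tauto.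
  - intros a b H. apply functional_extensionality; intro w.
    apply propositional_extensionality. split; [tauto|].
    intros [u [Ru Hu]]. split; [exists u; auto|]. exists u; split; auto.
    assert (E := equal_f H u). simpl in E. rewrite <- E in Hu. tauto.
Defined.

Lemma CA_eval F (V : nat -> world F -> Prop) t w : aeval (CA F) V t w <-> ksat F V w t.
Proof.
  revert w. induction t as [k| |a IHa b IHb|a IHa]; intro w; simpl.
  - tauto.
  - tauto.
  - rewrite IHa, IHb. tauto.
  - split; intros [u [Ru Hu]]; exists u; split; auto; apply IHa; auto.
Qed.

Lemma sle_CA F (X Y : car (CA F)) : sle (CA F) X Y <-> (forall w, X w -> Y w).
Proof.
  unfold sle. split.
  - intros H w Hx. assert (E := equal_f H w). simpl in E. rewrite <- E in Hx. tauto.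
  - intros H. apply functional_extensionality; intro w. simpl.
    apply propositional_extensionality. split; [tauto| intro; split; auto].
Qed.

Theorem theorem7p3 :
  forall n : nat, 1 <= n -> spi_complete (fun s => s = iota_fun n).
Proof.
  intros n Hn i. split.
  - intros HK A HA v.
    assert (Hax : slo_valid A (iota_fun n)) by (apply HA; reflexivity).
    apply (NF_slo n Hn A Hax v). intros c Hc.
    assert (Hnc := NF_normal n _ c Hc).
    apply (Cb n c Hnc). intro Hs.
    apply (Ca n c Hnc).
    assert (Hv : frame_valid (CF n) i).
    { apply HK. intros s ->. apply Cv; auto. }
    eapply NF_kripke; [apply Hv; exact Hs| exact Hc].
  - intros HS F HF V w Hs.
    assert (Hv : slo_valid (CA F) i).
    { apply HS. intros s ->. intros v. apply sle_CA. intros w' Hw'.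
      apply CA_eval. apply CA_eval in Hw'. apply (HF _ eq_refl); auto. }
    specialize (Hv V). apply sle_CA with (w := w) in Hv.
    + apply CA_eval in Hv. exact Hv.
    + apply CA_eval. exact Hs.
Qed.
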